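(* Every $3$-fine curve is a circle.
   Context: For nonzero plane vectors $u,v$, $\angle(u,v)\in\mathbb{R}/2\pi\mathbb{Z}$ is the counterclockwise angle from $u$ to $v$. A framed $n$-gon is a tuple $(B_1,\dots,B_n;u_1,\dots,u_n)$ of points $B_i$ in the plane with $B_i\neq B_{i+1}$ and unit vectors $u_i$ satisfying $\angle(u_i,B_{i+1}-B_i)=\angle(B_{i+1}-B_i,u_{i+1})$ for all $i$ (indices mod $n$); $(u_i)$ and $(-u_i)$ are identified. An $n$-fine curve ($n\ge3$) is an oriented closed plane curve $\gamma$ with a one-parameter family of inscribed $n$-gons $B(t)=(B_1(t),\dots,B_n(t))$, $B_j(t)\in\gamma$, such that $(B_1(t),\dots,B_n(t);T_1(t),\dots,T_n(t))$ is a framed $n$-gon, where $T_j(t)$ is the positive unit tangent vector of $\gamma$ at $B_j(t)$, and: (1) each velocity $B_j'(t)$ points in the positive direction of $\gamma$ for all $t,j$; (2) $B_j(t+1)=B_{j+1}(t)$ for all $t,j$; (3) the tangent lines to $\gamma$ at $B_j(t)$ and $B_{j+1}(t)$ are not parallel for all $t,j$. Families are considered up to reparametrization. *)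

(* Defs.v *)
From Stdlib Require Import Reals Lra Lia.
From Coquelicot Require Import Coquelicot.
Open Scope R_scope.

Definition pt := (R * R)%type.

Definition vsub (p q : pt) : pt := (fst p - fst q, snd p - snd q).
Definition vscale (c : R) (p : pt) : pt := (c * fst p, c * snd p).
Definition vnorm (p : pt) : R := sqrt (fst p ^ 2 + snd p ^ 2).
Definition vdet (p q : pt) : R := fst p * snd q - snd p * fst q.

Definition rot (theta : R) (p : pt) : pt :=
  (cos theta * fst p - sin theta * snd p, sin theta * fst p + cos theta * snd p).

(* theta is a representative (in R) of the counterclockwise angle from u to v
   (u, v nonzero): the direction of v is the direction of u rotated by theta. *)
Definition ccw_angle_is (u v : pt) (theta : R) : Prop :=
  vscale (/ vnorm v) v = rot theta (vscale (/ vnorm u) u).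

(* Equality in R/2piZ of angle(u,v) and angle(v',w): they have a common
   real representative. *)
Definition angle_eq (u v v' w : pt) : Prop :=
  exists theta, ccw_angle_is u v theta /\ ccw_angle_is v' w theta.

Definition succ_mod (n j : nat) : nat := ((j + 1) mod n)%nat.

(* Framed n-gon (B_0,...,B_{n-1}; u_0,...,u_{n-1}), indices mod n.
   (The identification (u_i) ~ (-u_i) does not affect the defining
   condition, which is invariant under a global sign change.) *)
Definition framed_ngon (n : nat) (B u : nat -> pt) : Prop :=
  forall i, (i < n)%nat ->
    B i <> B (succ_mod n i) /\
    vnorm (u i) = 1 /\
    angle_eq (u i) (vsub (B (succ_mod n i)) (B i))
             (vsub (B (succ_mod n i)) (B i)) (u (succ_mod n i)).

(* A closed plane curve: a smooth, regular, periodic map gamma : R -> R^2.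
   The orientation is that of increasing parameter. *)
Definition gx (g : R -> pt) : R -> R := fun s => fst (g s).
Definition gy (g : R -> pt) : R -> R := fun s => snd (g s).

Definition velocity (g : R -> pt) (s : R) : pt :=
  (Derive (gx g) s, Derive (gy g) s).

Definition closed_regular_curve (g : R -> pt) : Prop :=
  (forall k s, ex_derive (Derive_n (gx g) k) s /\ ex_derive (Derive_n (gy g) k) s) /\
  (exists L, 0 < L /\ forall s, g (s + L) = g s) /\
  (forall s, velocity g s <> (0, 0)).

Definition unit_tangent (g : R -> pt) (s : R) : pt :=
  vscale (/ vnorm (velocity g s)) (velocity g s).

(* n-fine curve.  The inscribed polygon vertices are B_j(t) = g (sj j t),
   j = 0..n-1, with parameter functions sj j differentiable in t. *)
Definition fine_curve (n : nat) (g : R -> pt) : Prop :=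
  (3 <= n)%nat /\ closed_regular_curve g /\
  exists sj : nat -> R -> R,
    (* (1) velocity B_j'(t) = (sj j)'(t) * gamma'(sj j t) points in the positive direction *)
    (forall j t, (j < n)%nat -> ex_derive (sj j) t /\ 0 < Derive (sj j) t) /\
    (forall j t, (j < n)%nat -> g (sj j (t + 1)) = g (sj (succ_mod n j) t)) /\
    (forall t, framed_ngon n (fun j => g (sj j t)) (fun j => unit_tangent g (sj j t))) /\
    (forall j t, (j < n)%nat ->
       vdet (unit_tangent g (sj j t)) (unit_tangent g (sj (succ_mod n j) t)) <> 0).

Definition is_circle (g : R -> pt) : Prop :=
  exists (c : pt) (r : R), 0 < r /\
    forall p : pt, (exists s, g s = p) <-> vnorm (vsub p c) = r.

(* Main.v *)
Require Import Defs.
From Stdlib Require Import Reals.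
From Coquelicot Require Import Coquelicot.
From Stdlib Require Import Lra Lia Psatz Classical FunctionalExtensionality.
Open Scope R_scope.

Lemma par (wx wy ux uy : R) : wx*ux + wy*uy = 0 -> ux^2+uy^2 <> 0 ->
  wx = ((wy*ux - wx*uy)/(ux^2+uy^2)) * (-uy) /\ wy = ((wy*ux - wx*uy)/(ux^2+uy^2)) * ux.
Proof.
  intros H Hn; split.
  - assert (Hq: wx * (ux^2+uy^2) = (wy*ux - wx*uy)*(-uy)) by (assert (ux*(wx*ux+wy*uy)=0) by (rewrite H; ring); lra).
    replace wx with (wx * (ux^2+uy^2) / (ux^2+uy^2)) at 1 by (field; auto).
    rewrite Hq; field; auto.
  - assert (Hq: wy * (ux^2+uy^2) = (wy*ux - wx*uy)*ux) by (assert (uy*(wx*ux+wy*uy)=0) by (rewrite H; ring); lra).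
    replace wy with (wy * (ux^2+uy^2) / (ux^2+uy^2)) at 1 by (field; auto).
    rewrite Hq; field; auto.
Qed.

Lemma S_nz (t0x t0y t1x t1y t2x t2y : R) :
  t0x^2+t0y^2 = 1 -> t1x^2+t1y^2 = 1 -> t2x^2+t2y^2 = 1 ->
  t0x*t1y - t0y*t1x <> 0 -> t1x*t2y - t1y*t2x <> 0 -> t2x*t0y - t2y*t0x <> 0 ->
  (t0x*t1y - t0y*t1x) + (t1x*t2y - t1y*t2x) + (t2x*t0y - t2y*t0x) <> 0.
Proof.
  intros h0 h1 h2 d01 d12 d20 S.
  set (ux := t1x - t0x); set (uy := t1y - t0y); set (wx := t2x - t0x); set (wy := t2y - t0y).
  assert (Hdet : ux*wy - uy*wx = 0) by (unfold ux,uy,wx,wy; lra).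
  assert (Hu : ux^2+uy^2 <> 0).
  { intro E. assert (ux = 0) by nra. assert (uy = 0) by nra. apply d01.
    unfold ux,uy in *. assert (t1x = t0x) by lra. assert (t1y = t0y) by lra. subst. nra. }
  set (l := (wx*ux+wy*uy)/(ux^2+uy^2)).
  assert (Ewx : wx = l*ux).
  { unfold l. assert (Hq: wx * (ux^2+uy^2) = (wx*ux+wy*uy)*ux) by (assert (uy*(ux*wy-uy*wx)=0) by (rewrite Hdet; ring); lra).
    replace wx with (wx * (ux^2+uy^2) / (ux^2+uy^2)) at 1 by (field; auto).
    rewrite Hq; field; auto. }
  assert (Ewy : wy = l*uy).
  { unfold l. assert (Hq: wy * (ux^2+uy^2) = (wx*ux+wy*uy)*uy) by (assert (ux*(ux*wy-uy*wx)=0) by (rewrite Hdet; ring); lra).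
    replace wy with (wy * (ux^2+uy^2) / (ux^2+uy^2)) at 1 by (field; auto).
    rewrite Hq; field; auto. }
  assert (Eu : 2*(t0x*ux+t0y*uy) + (ux^2+uy^2) = 0) by (unfold ux,uy; nra).
  assert (Ew : 2*(t0x*wx+t0y*wy) + (wx^2+wy^2) = 0) by (unfold wx,wy; nra).
  rewrite Ewx, Ewy in Ew.
  assert (El : l*(l-1)*(ux^2+uy^2) = 0).
  { assert (l*(l-1)*(ux^2+uy^2) = 2*(t0x*(l*ux)+t0y*(l*uy)) + ((l*ux)^2+(l*uy)^2) - l*(2*(t0x*ux+t0y*uy) + (ux^2+uy^2))) by ring.
    rewrite H, Ew, Eu. ring. }
  apply Rmult_integral in El as [El|El]; [|contradiction].
  apply Rmult_integral in El as [El|El].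
  - apply d20. rewrite El in Ewx, Ewy. unfold wx, wy in *.
    assert (t2x = t0x) by lra. assert (t2y = t0y) by lra. subst. ring.
  - apply d12. assert (l = 1) by lra. subst l. rewrite H in Ewx, Ewy. unfold wx,wy,ux,uy in *.
    assert (t2x = t1x) by lra. assert (t2y = t1y) by lra. rewrite H0, H1. ring.
Qed.

Lemma sq0 (x y : R) : x^2 + y^2 = 0 -> x = 0 /\ y = 0.
Proof. intro H. split; nra. Qed.

Lemma geom (b0x b0y b1x b1y b2x b2y t0x t0y t1x t1y t2x t2y px py : R) :
  t0x^2+t0y^2 = 1 -> t1x^2+t1y^2 = 1 -> t2x^2+t2y^2 = 1 ->
  t0x*t1y - t0y*t1x <> 0 -> t1x*t2y - t1y*t2x <> 0 -> t2x*t0y - t2y*t0x <> 0 ->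
  ~ (b0x = b1x /\ b0y = b1y) ->
  (b1x-b0x)*(t0x-t1x) + (b1y-b0y)*(t0y-t1y) = 0 ->
  (b2x-b1x)*(t1x-t2x) + (b2y-b1y)*(t1y-t2y) = 0 ->
  (b0x-b2x)*(t2x-t0x) + (b0y-b2y)*(t2y-t0y) = 0 ->
  (px-b0x)*t0x + (py-b0y)*t0y = 0 ->
  (px-b1x)*t1x + (py-b1y)*t1y = 0 ->
  (px-b2x)*t2x + (py-b2y)*t2y = 0 /\
  (px-b1x)^2+(py-b1y)^2 = (px-b0x)^2+(py-b0y)^2 /\
  (px-b2x)^2+(py-b2y)^2 = (px-b0x)^2+(py-b0y)^2 /\
  (b1x-b0x)*(b2y-b1y) - (b1y-b0y)*(b2x-b1x) <> 0.
Proof.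
  intros n0 n1 n2 d01 d12 d20 NB H0 H1 H2 P0 P1.
  pose proof (S_nz _ _ _ _ _ _ n0 n1 n2 d01 d12 d20) as HS.
  destruct (par _ _ _ _ P0 ltac:(lra)) as [E0x E0y].
  destruct (par _ _ _ _ P1 ltac:(lra)) as [E1x E1y].
  set (a := ((py - b0y) * t0x - (px - b0x) * t0y) / (t0x ^ 2 + t0y ^ 2)) in *.
  set (b := ((py - b1y) * t1x - (px - b1x) * t1y) / (t1x ^ 2 + t1y ^ 2)) in *.
  clearbody a b.
  assert (Hab : a = b).
  { assert (E: (b1x-b0x)*(t0x-t1x) + (b1y-b0y)*(t0y-t1y) = (b - a) * (t0x*t1y - t0y*t1x)).
    { replace (b1x-b0x) with ((px-b0x)-(px-b1x)) by ring.
      replace (b1y-b0y) with ((py-b0y)-(py-b1y)) by ring.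
      rewrite E0x, E0y, E1x, E1y. ring. }
    rewrite H0 in E. symmetry in E. apply Rmult_integral in E as [E|E]; [lra|contradiction]. }
  subst b.
  assert (n12 : (t1x-t2x)^2+(t1y-t2y)^2 <> 0).
  { intro E. apply d12. apply sq0 in E as [E E']. 
    replace t1x with t2x by lra. replace t1y with t2y by lra. ring. }
  assert (n20 : (t2x-t0x)^2+(t2y-t0y)^2 <> 0).
  { intro E. apply d20. apply sq0 in E as [E E'].
    replace t2x with t0x by lra. replace t2y with t0y by lra. ring. }
  destruct (par _ _ _ _ H1 n12) as [C1x C1y].
  destruct (par _ _ _ _ H2 n20) as [C2x C2y].
  set (r1 := ((b2y - b1y) * (t1x - t2x) - (b2x - b1x) * (t1y - t2y)) / ((t1x - t2x) ^ 2 + (t1y - t2y) ^ 2)) in *.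
  set (r2 := ((b0y - b2y) * (t2x - t0x) - (b0x - b2x) * (t2y - t0y)) / ((t2x - t0x) ^ 2 + (t2y - t0y) ^ 2)) in *.
  clearbody r1 r2.
  assert (Sx : (a - r2) * (t0y - t2y) + (r1 - a) * (t1y - t2y) = 0).
  { assert (E: (b1x-b0x) + (b2x-b1x) + (b0x-b2x) = 0) by ring.
    replace (b1x-b0x) with ((px-b0x)-(px-b1x)) in E by ring.
    rewrite E0x, E1x, C1x, C2x in E. lra. }
  assert (Sy : (a - r2) * (t0x - t2x) + (r1 - a) * (t1x - t2x) = 0).
  { assert (E: (b1y-b0y) + (b2y-b1y) + (b0y-b2y) = 0) by ring.
    replace (b1y-b0y) with ((py-b0y)-(py-b1y)) in E by ring.
    rewrite E0y, E1y, C1y, C2y in E. lra. }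
  set (S := (t0x*t1y - t0y*t1x) + (t1x*t2y - t1y*t2x) + (t2x*t0y - t2y*t0x)) in *.
  assert (X0 : (a - r2) * S = 0).
  { assert (E : (a - r2) * S = ((a - r2) * (t0x - t2x) + (r1 - a) * (t1x - t2x)) * (t1y - t2y)
                  - ((a - r2) * (t0y - t2y) + (r1 - a) * (t1y - t2y)) * (t1x - t2x)) by (unfold S; ring).
    rewrite E, Sx, Sy. ring. }
  assert (Y0 : (r1 - a) * S = 0).
  { assert (E : (r1 - a) * S = ((a - r2) * (t0y - t2y) + (r1 - a) * (t1y - t2y)) * (t0x - t2x)
                  - ((a - r2) * (t0x - t2x) + (r1 - a) * (t1x - t2x)) * (t0y - t2y)) by (unfold S; ring).
    rewrite E, Sx, Sy. ring. }
  apply Rmult_integral in X0 as [X0|X0]; [|contradiction].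
  apply Rmult_integral in Y0 as [Y0|Y0]; [|contradiction].
  assert (r1 = a) by lra. assert (r2 = a) by lra. subst r1 r2.
  assert (E2x : px - b2x = a * (- t2y)).
  { replace (px - b2x) with ((px - b1x) - (b2x - b1x)) by ring. rewrite E1x, C1x. ring. }
  assert (E2y : py - b2y = a * t2x).
  { replace (py - b2y) with ((py - b1y) - (b2y - b1y)) by ring. rewrite E1y, C1y. ring. }
  assert (Ha : a <> 0).
  { intro Ha. apply NB. rewrite Ha in E0x, E0y, E1x, E1y. lra. }
  split; [|split; [|split]].
  - rewrite E2x, E2y. ring.
  - rewrite E0x, E0y, E1x, E1y.
    replace ((a * - t1y) ^ 2 + (a * t1x) ^ 2) with (a^2 * (t1x^2+t1y^2)) by ring.
    replace ((a * - t0y) ^ 2 + (a * t0x) ^ 2) with (a^2 * (t0x^2+t0y^2)) by ring.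
    rewrite n0, n1; ring.
  - rewrite E0x, E0y, E2x, E2y.
    replace ((a * - t2y) ^ 2 + (a * t2x) ^ 2) with (a^2 * (t2x^2+t2y^2)) by ring.
    replace ((a * - t0y) ^ 2 + (a * t0x) ^ 2) with (a^2 * (t0x^2+t0y^2)) by ring.
    rewrite n0, n2; ring.
  - rewrite C1x, C1y.
    replace (b1x-b0x) with ((px-b0x)-(px-b1x)) by ring.
    replace (b1y-b0y) with ((py-b0y)-(py-b1y)) by ring.
    rewrite E0x, E0y, E1x, E1y.
    replace ((a * - t0y - a * - t1y) * (a * (t1x - t2x)) - (a * t0x - a * t1x) * (a * - (t1y - t2y)))
      with (a*a*S) by (unfold S; ring).
    apply Rmult_integral_contrapositive; split; [apply Rmult_integral_contrapositive; split|]; auto.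
Qed.

Lemma vnorm_pos (v : pt) : v <> (0,0) -> 0 < vnorm v.
Proof.
  destruct v as [x y]; unfold vnorm; simpl; intro H. apply sqrt_lt_R0.
  destruct (Req_dec x 0), (Req_dec y 0); subst; [contradiction| nra | nra | nra].
Qed.

Lemma norm1 (v : pt) : vnorm v = 1 -> fst v ^2 + snd v ^2 = 1.
Proof.
  unfold vnorm; intro H. rewrite <- (sqrt_sqrt (fst v ^2 + snd v ^2)).
  - rewrite H; ring.
  - nra.
Qed.

Lemma angle_dot (u c w : pt) : vnorm u = 1 -> vnorm w = 1 -> c <> (0,0) -> angle_eq u c c w ->
  fst c * (fst u - fst w) + snd c * (snd u - snd w) = 0.
Proof.
  intros Hu Hw Hc [th [H1 H2]]. unfold ccw_angle_is in *.
  rewrite Hu in H1. rewrite Hw in H2. pose proof (vnorm_pos c Hc) as Hn.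
  set (k := / vnorm c) in *. assert (Hk : k <> 0) by (unfold k; apply Rinv_neq_0_compat; lra).
  clearbody k. destruct u as [ux uy], c as [cx cy], w as [wx wy].
  unfold vscale, rot in *; simpl in *. rewrite Rinv_1 in *.
  injection H1 as H1a H1b. injection H2 as H2a H2b.
  assert (Hcs : cos th ^2 + sin th ^2 = 1) by (rewrite <- (sin2_cos2 th); unfold Rsqr; ring).
  rewrite !Rmult_1_l in *.
  assert (E : k * (cx * (ux - wx) + cy * (uy - wy)) = 0).
  { transitivity ((k*cx)*ux + (k*cy)*uy - ((k*cx)*wx + (k*cy)*wy)); [ring|].
    rewrite H2a, H2b, H1a, H1b.
    transitivity (cos th * (ux^2+uy^2) * (1 - (cos th^2+sin th^2))); [ring | rewrite Hcs; ring]. }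
  apply Rmult_integral in E as [E|E]; [contradiction|exact E].
Qed.

Definition Bx (g : R -> pt) (s : R -> R) (t : R) := fst (g (s t)).
Definition By (g : R -> pt) (s : R -> R) (t : R) := snd (g (s t)).
Definition Vx (g : R -> pt) (s : R -> R) (t : R) := Derive (gx g) (s t).
Definition Vy (g : R -> pt) (s : R -> R) (t : R) := Derive (gy g) (s t).
Definition Kc g s0 s1 t := ((Bx g s1 t - Bx g s0 t) * Vx g s1 t + (By g s1 t - By g s0 t) * Vy g s1 t)
   / (Vx g s0 t * Vy g s1 t - Vy g s0 t * Vx g s1 t).
Definition Cx g s0 s1 t := Bx g s0 t + Kc g s0 s1 t * (- Vy g s0 t).
Definition Cy g s0 s1 t := By g s0 t + Kc g s0 s1 t * Vx g s0 t.

Lemma vsub_nz (p q : pt) : p <> q -> vsub p q <> (0,0).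
Proof.
  destruct p as [a b], q as [c d]; unfold vsub; simpl; intros H E. injection E as E1 E2.
  apply H. f_equal; lra.
Qed.

Lemma ut_eq g s : unit_tangent g s = (/ vnorm (velocity g s) * Derive (gx g) s, / vnorm (velocity g s) * Derive (gy g) s).
Proof. reflexivity. Qed.

Lemma pointwise (g : R -> pt) (s0 s1 s2 : R -> R) (t : R) :
  (forall s, velocity g s <> (0,0)) ->
  g (s0 t) <> g (s1 t) -> g (s1 t) <> g (s2 t) -> g (s2 t) <> g (s0 t) ->
  vnorm (unit_tangent g (s0 t)) = 1 -> vnorm (unit_tangent g (s1 t)) = 1 -> vnorm (unit_tangent g (s2 t)) = 1 ->
  angle_eq (unit_tangent g (s0 t)) (vsub (g (s1 t)) (g (s0 t))) (vsub (g (s1 t)) (g (s0 t))) (unit_tangent g (s1 t)) ->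
  angle_eq (unit_tangent g (s1 t)) (vsub (g (s2 t)) (g (s1 t))) (vsub (g (s2 t)) (g (s1 t))) (unit_tangent g (s2 t)) ->
  angle_eq (unit_tangent g (s2 t)) (vsub (g (s0 t)) (g (s2 t))) (vsub (g (s0 t)) (g (s2 t))) (unit_tangent g (s0 t)) ->
  vdet (unit_tangent g (s0 t)) (unit_tangent g (s1 t)) <> 0 ->
  vdet (unit_tangent g (s1 t)) (unit_tangent g (s2 t)) <> 0 ->
  vdet (unit_tangent g (s2 t)) (unit_tangent g (s0 t)) <> 0 ->
  (Cx g s0 s1 t - Bx g s0 t) * Vx g s0 t + (Cy g s0 s1 t - By g s0 t) * Vy g s0 t = 0 /\
  (Cx g s0 s1 t - Bx g s1 t) * Vx g s1 t + (Cy g s0 s1 t - By g s1 t) * Vy g s1 t = 0 /\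
  (Cx g s0 s1 t - Bx g s2 t) * Vx g s2 t + (Cy g s0 s1 t - By g s2 t) * Vy g s2 t = 0 /\
  (Cx g s0 s1 t - Bx g s1 t)^2 + (Cy g s0 s1 t - By g s1 t)^2 = (Cx g s0 s1 t - Bx g s0 t)^2 + (Cy g s0 s1 t - By g s0 t)^2 /\
  (Cx g s0 s1 t - Bx g s2 t)^2 + (Cy g s0 s1 t - By g s2 t)^2 = (Cx g s0 s1 t - Bx g s0 t)^2 + (Cy g s0 s1 t - By g s0 t)^2 /\
  (Bx g s1 t - Bx g s0 t) * (By g s2 t - By g s1 t) - (By g s1 t - By g s0 t) * (Bx g s2 t - Bx g s1 t) <> 0 /\
  0 < (Cx g s0 s1 t - Bx g s0 t)^2 + (Cy g s0 s1 t - By g s0 t)^2.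
Proof.
  intros Hreg N01 N12 N20 U0 U1 U2 A0 A1 A2 D01 D12 D20.
  pose proof (angle_dot _ _ _ U0 U1 (vsub_nz _ _ (not_eq_sym N01)) A0) as H0.
  pose proof (angle_dot _ _ _ U1 U2 (vsub_nz _ _ (not_eq_sym N12)) A1) as H1.
  pose proof (angle_dot _ _ _ U2 U0 (vsub_nz _ _ (not_eq_sym N20)) A2) as H2.
  apply norm1 in U0, U1, U2.
  pose proof (vnorm_pos _ (Hreg (s0 t))) as n0.
  pose proof (vnorm_pos _ (Hreg (s1 t))) as n1.
  pose proof (vnorm_pos _ (Hreg (s2 t))) as n2.
  unfold vdet, vsub in *. rewrite !ut_eq in *. simpl in *.
  unfold Cx, Cy, Kc, Bx, By, Vx, Vy.
  set (m0 := vnorm (velocity g (s0 t))) in *.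
  set (m1 := vnorm (velocity g (s1 t))) in *.
  set (m2 := vnorm (velocity g (s2 t))) in *.
  set (v0x := Derive (gx g) (s0 t)) in *. set (v0y := Derive (gy g) (s0 t)) in *.
  set (v1x := Derive (gx g) (s1 t)) in *. set (v1y := Derive (gy g) (s1 t)) in *.
  set (v2x := Derive (gx g) (s2 t)) in *. set (v2y := Derive (gy g) (s2 t)) in *.
  destruct (g (s0 t)) as [b0x b0y]. destruct (g (s1 t)) as [b1x b1y]. destruct (g (s2 t)) as [b2x b2y].
  simpl in *. clearbody m0 m1 m2 v0x v0y v1x v1y v2x v2y.
  assert (Dv : v0x * v1y - v0y * v1x <> 0).
  { intro E. apply D01. transitivity (/m0 * /m1 * (v0x * v1y - v0y * v1x)); [ring|]. rewrite E; ring. }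
  set (k := ((b1x - b0x) * v1x + (b1y - b0y) * v1y) / (v0x * v1y - v0y * v1x)).
  assert (P1v : (b0x + k * - v0y - b1x) * v1x + (b0y + k * v0x - b1y) * v1y = 0).
  { unfold k. field. exact Dv. }
  assert (NB : ~ (b0x = b1x /\ b0y = b1y)).
  { intros [E1 E2]. apply N01. subst; reflexivity. }
  destruct (geom b0x b0y b1x b1y b2x b2y (/m0*v0x) (/m0*v0y) (/m1*v1x) (/m1*v1y) (/m2*v2x) (/m2*v2y)
     (b0x + k * - v0y) (b0y + k * v0x) U0 U1 U2 D01 D12 D20 NB H0 H1 H2) as [G2 [G1 [G3 G4]]].
  - ring.
  - transitivity (/m1 * ((b0x + k * - v0y - b1x) * v1x + (b0y + k * v0x - b1y) * v1y)); [ring|].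
    rewrite P1v; ring.
  - fold k. split; [ring|]. split; [exact P1v|]. split.
    + assert (E : (b0x + k * - v0y - b2x) * v2x + (b0y + k * v0x - b2y) * v2y =
                  m2 * ((b0x + k * - v0y - b2x) * (/ m2 * v2x) + (b0y + k * v0x - b2y) * (/ m2 * v2y))).
      { field. lra. }
      rewrite E, G2; ring.
    + split; [exact G1|]. split; [exact G3|]. split; [exact G4|].
      assert (Hnn : 0 <= (b0x + k * - v0y - b0x) ^ 2 + (b0y + k * v0x - b0y) ^ 2) by nra.
      destruct Hnn as [Hp|Hz]; [exact Hp|]. exfalso. apply NB.
      pose proof Hz as Hz'. symmetry in Hz'. apply sq0 in Hz' as [E1 E2].
      rewrite <- Hz in G1. apply sq0 in G1 as [E3 E4]. split; lra.
Qed.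

Definition smooth (g : R -> pt) := forall k s, ex_derive (Derive_n (gx g) k) s /\ ex_derive (Derive_n (gy g) k) s.

Lemma dBx g (s : R -> R) t ds : smooth g -> is_derive s t ds -> is_derive (Bx g s) t (ds * Vx g s t).
Proof.
  intros Hs Hd. destruct (Hs 0%nat (s t)) as [H _]. simpl in H.
  apply Derive_correct in H. exact (is_derive_comp (gx g) s t _ _ H Hd).
Qed.
Lemma dBy g (s : R -> R) t ds : smooth g -> is_derive s t ds -> is_derive (By g s) t (ds * Vy g s t).
Proof.
  intros Hs Hd. destruct (Hs 0%nat (s t)) as [_ H]. simpl in H.
  apply Derive_correct in H. exact (is_derive_comp (gy g) s t _ _ H Hd).
Qed.
Lemma dVx g (s : R -> R) t ds : smooth g -> is_derive s t ds -> ex_derive (Vx g s) t.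
Proof.
  intros Hs Hd. destruct (Hs 1%nat (s t)) as [H _]. simpl in H.
  apply Derive_correct in H. eexists. exact (is_derive_comp _ s t _ _ H Hd).
Qed.
Lemma dVy g (s : R -> R) t ds : smooth g -> is_derive s t ds -> ex_derive (Vy g s) t.
Proof.
  intros Hs Hd. destruct (Hs 1%nat (s t)) as [_ H]. simpl in H.
  apply Derive_correct in H. eexists. exact (is_derive_comp _ s t _ _ H Hd).
Qed.

Lemma dist_deriv (fx bx fy byy : R -> R) t dfx dbx dfy dby : is_derive fx t dfx -> is_derive bx t dbx ->
  is_derive fy t dfy -> is_derive byy t dby ->
  is_derive (fun t => (fx t - bx t)^2 + (fy t - byy t)^2) t (2*(fx t - bx t)*(dfx - dbx) + 2*(fy t - byy t)*(dfy-dby)).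
Proof.
  intros H H0 H1 H2. auto_derive.
  - repeat split; eexists; eassumption.
  - replace (Derive (fun x => fx x) t) with dfx by (symmetry; apply is_derive_unique; exact H).
    replace (Derive (fun x => bx x) t) with dbx by (symmetry; apply is_derive_unique; exact H0).
    replace (Derive (fun x => fy x) t) with dfy by (symmetry; apply is_derive_unique; exact H1).
    replace (Derive (fun x => byy x) t) with dby by (symmetry; apply is_derive_unique; exact H2).
    ring.
Qed.

Lemma dCx g s0 s1 t d0 d1 : smooth g -> is_derive s0 t d0 -> is_derive s1 t d1 ->
  Vx g s0 t * Vy g s1 t - Vy g s0 t * Vx g s1 t <> 0 ->
  ex_derive (Cx g s0 s1) t /\ ex_derive (Cy g s0 s1) t.
Proof.
  intros Hs H0 H1 Hd.
  pose proof (dBx g s0 t d0 Hs H0). pose proof (dBy g s0 t d0 Hs H0).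
  pose proof (dBx g s1 t d1 Hs H1). pose proof (dBy g s1 t d1 Hs H1).
  pose proof (dVx g s0 t d0 Hs H0). pose proof (dVy g s0 t d0 Hs H0).
  pose proof (dVx g s1 t d1 Hs H1). pose proof (dVy g s1 t d1 Hs H1).
  unfold Cx, Cy, Kc; split; auto_derive; repeat split; try (eexists; eassumption); try assumption.
Qed.

Lemma const0 (f : R -> R) : (forall t, is_derive f t 0) -> forall t, f t = f 0.
Proof.
  intros H t. destruct (Rtotal_order t 0) as [h|[h|h]].
  - refine (eq_is_derive f t 0 _ h). intros; apply H.
  - subst; reflexivity.
  - symmetry; refine (eq_is_derive f 0 t _ h). intros; apply H.
Qed.

Definition dist2 g s0 s1 (s : R -> R) t := (Cx g s0 s1 t - Bx g s t)^2 + (Cy g s0 s1 t - By g s t)^2.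

Lemma center_deriv0 g (s0 s1 s2 : R -> R) t :
  smooth g -> (forall t, ex_derive s0 t) -> (forall t, ex_derive s1 t) -> (forall t, ex_derive s2 t) ->
  Vx g s0 t * Vy g s1 t - Vy g s0 t * Vx g s1 t <> 0 ->
  (Cx g s0 s1 t - Bx g s0 t) * Vx g s0 t + (Cy g s0 s1 t - By g s0 t) * Vy g s0 t = 0 ->
  (Cx g s0 s1 t - Bx g s1 t) * Vx g s1 t + (Cy g s0 s1 t - By g s1 t) * Vy g s1 t = 0 ->
  (Cx g s0 s1 t - Bx g s2 t) * Vx g s2 t + (Cy g s0 s1 t - By g s2 t) * Vy g s2 t = 0 ->
  (forall t, dist2 g s0 s1 s1 t = dist2 g s0 s1 s0 t) ->
  (forall t, dist2 g s0 s1 s2 t = dist2 g s0 s1 s0 t) ->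
  (Bx g s1 t - Bx g s0 t) * (By g s2 t - By g s1 t) - (By g s1 t - By g s0 t) * (Bx g s2 t - Bx g s1 t) <> 0 ->
  is_derive (Cx g s0 s1) t 0 /\ is_derive (Cy g s0 s1) t 0 /\ is_derive (dist2 g s0 s1 s0) t 0.
Proof.
  intros Hs E0 E1 E2 Hd O0 O1 O2 F1 F2 Hdet.
  specialize (E0 t); specialize (E1 t); specialize (E2 t).
  apply Derive_correct in E0, E1, E2.
  destruct (dCx g s0 s1 t _ _ Hs E0 E1 Hd) as [Cdx Cdy].
  apply Derive_correct in Cdx, Cdy.
  set (cx' := Derive (Cx g s0 s1) t) in *. set (cy' := Derive (Cy g s0 s1) t) in *.
  pose proof (dist_deriv _ _ _ _ t _ _ _ _ Cdx (dBx g s0 t _ Hs E0) Cdy (dBy g s0 t _ Hs E0) : is_derive (dist2 g s0 s1 s0) t _) as D0.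
  pose proof (dist_deriv _ _ _ _ t _ _ _ _ Cdx (dBx g s1 t _ Hs E1) Cdy (dBy g s1 t _ Hs E1) : is_derive (dist2 g s0 s1 s1) t _) as D1.
  pose proof (dist_deriv _ _ _ _ t _ _ _ _ Cdx (dBx g s2 t _ Hs E2) Cdy (dBy g s2 t _ Hs E2) : is_derive (dist2 g s0 s1 s2) t _) as D2.
  apply (is_derive_ext (dist2 g s0 s1 s1) (dist2 g s0 s1 s0) _ _ F1) in D1.
  apply (is_derive_ext (dist2 g s0 s1 s2) (dist2 g s0 s1 s0) _ _ F2) in D2.
  apply is_derive_unique in D0, D1, D2. rewrite D0 in D1, D2.
  set (ds0 := Derive s0 t) in *. set (ds1 := Derive s1 t) in *. set (ds2 := Derive s2 t) in *.
  set (cx := Cx g s0 s1 t) in *. set (cy := Cy g s0 s1 t) in *.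
  set (b0x := Bx g s0 t) in *. set (b0y := By g s0 t) in *.
  set (b1x := Bx g s1 t) in *. set (b1y := By g s1 t) in *.
  set (b2x := Bx g s2 t) in *. set (b2y := By g s2 t) in *.
  set (v0x := Vx g s0 t) in *. set (v0y := Vy g s0 t) in *.
  set (v1x := Vx g s1 t) in *. set (v1y := Vy g s1 t) in *.
  set (v2x := Vx g s2 t) in *. set (v2y := Vy g s2 t) in *.
  assert (Q0 : 2 * (cx - b0x) * (cx' - ds0 * v0x) + 2 * (cy - b0y) * (cy' - ds0 * v0y) = 2*((cx-b0x)*cx' + (cy-b0y)*cy')).
  { transitivity (2*((cx-b0x)*cx' + (cy-b0y)*cy') - 2*ds0*((cx - b0x) * v0x + (cy - b0y) * v0y)); [ring|]. rewrite O0; ring. }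
  assert (Q1 : 2 * (cx - b1x) * (cx' - ds1 * v1x) + 2 * (cy - b1y) * (cy' - ds1 * v1y) = 2*((cx-b1x)*cx' + (cy-b1y)*cy')).
  { transitivity (2*((cx-b1x)*cx' + (cy-b1y)*cy') - 2*ds1*((cx - b1x) * v1x + (cy - b1y) * v1y)); [ring|]. rewrite O1; ring. }
  assert (Q2 : 2 * (cx - b2x) * (cx' - ds2 * v2x) + 2 * (cy - b2y) * (cy' - ds2 * v2y) = 2*((cx-b2x)*cx' + (cy-b2y)*cy')).
  { transitivity (2*((cx-b2x)*cx' + (cy-b2y)*cy') - 2*ds2*((cx - b2x) * v2x + (cy - b2y) * v2y)); [ring|]. rewrite O2; ring. }
  rewrite Q0 in D0, D1, D2. rewrite Q1 in D1. rewrite Q2 in D2.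
  assert (L1 : (b1x - b0x) * cx' + (b1y - b0y) * cy' = 0) by lra.
  assert (L2 : (b2x - b1x) * cx' + (b2y - b1y) * cy' = 0) by lra.
  assert (Zx : cx' * ((b1x - b0x) * (b2y - b1y) - (b1y - b0y) * (b2x - b1x)) = 0).
  { transitivity (((b1x - b0x) * cx' + (b1y - b0y) * cy') * (b2y - b1y) - ((b2x - b1x) * cx' + (b2y - b1y) * cy') * (b1y-b0y)); [ring|].
    rewrite L1, L2; ring. }
  assert (Zy : cy' * ((b1x - b0x) * (b2y - b1y) - (b1y - b0y) * (b2x - b1x)) = 0).
  { transitivity (((b2x - b1x) * cx' + (b2y - b1y) * cy') * (b1x - b0x) - ((b1x - b0x) * cx' + (b1y - b0y) * cy') * (b2x-b1x)); [ring|].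
    rewrite L1, L2; ring. }
  apply Rmult_integral in Zx as [Zx|Zx]; [|contradiction].
  apply Rmult_integral in Zy as [Zy|Zy]; [|contradiction].
  rewrite Zx in Cdx. rewrite Zy in Cdy. split; [exact Cdx|split; [exact Cdy|]].
  pose proof (dist_deriv _ _ _ _ t _ _ _ _ Cdx (dBx g s0 t _ Hs E0) Cdy (dBy g s0 t _ Hs E0) : is_derive (dist2 g s0 s1 s0) t _) as D.
  fold cx cy b0x b0y v0x v0y ds0 in D.
  replace (2 * (cx - b0x) * (0 - ds0 * v0x) + 2 * (cy - b0y) * (0 - ds0 * v0y)) with
     (- 2 * ds0 * ((cx - b0x) * v0x + (cy - b0y) * v0y)) in D by ring.
  rewrite O0 in D. replace (- 2 * ds0 * 0) with 0 in D by ring. exact D.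
Qed.

Lemma ex_derive_cont (f : R -> R) x : ex_derive f x -> continuity_pt f x.
Proof. intro H. apply continuity_pt_filterlim. apply (ex_derive_continuous f x H). Qed.

Lemma cv_const (c : R) : Un_cv (fun _ => c) c.
Proof. intros e He. exists 0%nat. intros. unfold R_dist. rewrite Rminus_diag, Rabs_R0. exact He. Qed.

Lemma no_ub (h : R -> R) (g : R -> pt) M :
  (forall x y, x < y -> h x < h y) -> continuity (gx g) -> continuity (gy g) ->
  (forall t, g (h (t+3)) = g (h t)) -> (forall t, h t <= M) -> g (h 0) = g (h 1).
Proof.
  intros Hinc Cx Cy Hp Hb.
  set (u := fun n => h (3 * INR n)). set (w := fun n => h (3 * INR n + 1)).
  assert (Ug : Un_growing u).
  { intro n. unfold u. rewrite S_INR. left. apply Hinc. lra. }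
  assert (Wg : Un_growing w).
  { intro n. unfold w. rewrite S_INR. left. apply Hinc. lra. }
  destruct (growing_cv u Ug) as [l Hl]. { exists M. intros x [n ->]. apply Hb. }
  destruct (growing_cv w Wg) as [l' Hl']. { exists M. intros x [n ->]. apply Hb. }
  assert (E1 : l <= l').
  { eapply Rle_cv_lim; [ | exact Hl | exact Hl']. intro n. unfold u, w. left. apply Hinc. lra. }
  assert (E2 : l' <= l).
  { eapply Rle_cv_lim; [ | exact Hl' | apply (cv_const l)].
    intro n. apply Rle_trans with (u (S n)). unfold u, w. rewrite S_INR. left. apply Hinc. lra.
    apply growing_ineq; auto. }
  assert (El : l = l') by lra. subst l'.
  assert (Pu : forall n, g (u n) = g (h 0)).
  { induction n. - unfold u. simpl. f_equal. f_equal. ring.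
    - unfold u in *. rewrite S_INR. replace (3 * (INR n + 1)) with (3 * INR n + 3) by ring. rewrite Hp. exact IHn. }
  assert (Pw : forall n, g (w n) = g (h 1)).
  { induction n. - unfold w. simpl. f_equal. f_equal. ring.
    - unfold w in *. rewrite S_INR. replace (3 * (INR n + 1) + 1) with ((3 * INR n + 1) + 3) by ring. rewrite Hp. exact IHn. }
  assert (A1 : gx g (h 0) = gx g l).
  { apply (UL_sequence (fun n => gx g (u n))). 2: apply continuity_seq; auto.
    eapply Un_cv_ext. 2: apply cv_const. intro n. simpl. unfold gx. rewrite Pu. reflexivity. }
  assert (A2 : gy g (h 0) = gy g l).
  { apply (UL_sequence (fun n => gy g (u n))). 2: apply continuity_seq; auto.
    eapply Un_cv_ext. 2: apply cv_const. intro n. simpl. unfold gy. rewrite Pu. reflexivity. }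
  assert (A3 : gx g (h 1) = gx g l).
  { apply (UL_sequence (fun n => gx g (w n))). 2: apply continuity_seq; auto.
    eapply Un_cv_ext. 2: apply cv_const. intro n. simpl. unfold gx. rewrite Pw. reflexivity. }
  assert (A4 : gy g (h 1) = gy g l).
  { apply (UL_sequence (fun n => gy g (w n))). 2: apply continuity_seq; auto.
    eapply Un_cv_ext. 2: apply cv_const. intro n. simpl. unfold gy. rewrite Pw. reflexivity. }
  unfold gx, gy in *. rewrite (surjective_pairing (g (h 0))), (surjective_pairing (g (h 1))).
  rewrite A1, A2, A3, A4. reflexivity.
Qed.

Lemma cont_neg (f : R -> R) : continuity f -> continuity (fun y => f (-y)).
Proof.
  intros Hf x. apply (continuity_pt_comp Ropp f x).
  - apply ex_derive_cont. auto_derive. exact I.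
  - apply Hf.
Qed.

Lemma no_lb (h : R -> R) (g : R -> pt) M :
  (forall x y, x < y -> h x < h y) -> continuity (gx g) -> continuity (gy g) ->
  (forall t, g (h (t+3)) = g (h t)) -> (forall t, M <= h t) -> g (h 0) = g (h (-1)).
Proof.
  intros Hinc Cx Cy Hp Hb.
  pose proof (no_ub (fun x => - h (-x)) (fun y => g (-y)) (-M)) as N.
  simpl in N. rewrite !Ropp_involutive, Ropp_0 in N. apply N.
  - intros x y Hxy. assert (h (-y) < h (-x)) by (apply Hinc; lra). lra.
  - apply (cont_neg (gx g)); auto.
  - apply (cont_neg (gy g)); auto.
  - intro t. rewrite !Ropp_involutive. rewrite <- (Hp (-(t+3))). f_equal. f_equal. ring.
  - intro t. specialize (Hb (-t)). lra.
Qed.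

Lemma surj (h : R -> R) (g : R -> pt) :
  (forall x y, x < y -> h x < h y) -> continuity h -> continuity (gx g) -> continuity (gy g) ->
  (forall t, g (h (t+3)) = g (h t)) -> g (h 0) <> g (h 1) -> g (h 0) <> g (h (-1)) ->
  forall s, exists t, h t = s.
Proof.
  intros Hinc Ch Cx Cy Hp N1 N2 s.
  assert (T1 : exists t, s <= h t).
  { apply NNPP. intro H. apply N1. apply (no_ub h g s); auto.
    intro t. destruct (Rle_dec (h t) s); auto. exfalso. apply H. exists t. lra. }
  assert (T2 : exists t, h t <= s).
  { apply NNPP. intro H. apply N2. apply (no_lb h g s); auto.
    intro t. destruct (Rle_dec s (h t)); auto. exfalso. apply H. exists t. lra. }
  destruct T1 as [t1 H1], T2 as [t2 H2].
  destruct (IVT_gen h t2 t1 s Ch) as [x [_ Hx]].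
  - split; [apply Rle_trans with (h t2); [apply Rmin_l|auto] | apply Rle_trans with (h t1); [auto|apply Rmax_r]].
  - exists x; exact Hx.
Qed.

Lemma cover (bx byy vx vy ds : R -> R) (cx cy r2 qx qy : R) :
 (forall t, is_derive bx t (ds t * vx t)) -> (forall t, is_derive byy t (ds t * vy t)) ->
 (forall t, 0 < ds t) -> (forall t, vx t ^2 + vy t^2 <> 0) ->
 (forall t, (bx t - cx) * vx t + (byy t - cy) * vy t = 0) ->
 (forall t, (bx t - cx)^2 + (byy t - cy)^2 = r2) ->
 (forall t, bx (t+3) = bx t) -> (forall t, byy (t+3) = byy t) ->
 ~ (bx 0 = bx 1 /\ byy 0 = byy 1) ->
 (qx - cx)^2 + (qy - cy)^2 = r2 -> exists t, bx t = qx /\ byy t = qy.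
Proof.
  intros Dx Dy Pds Nv Ort Rad Px Py N01 Hq. pose proof Hq as Hq0.
  set (f := fun t => (bx t - cx)*(qx - cx) + (byy t - cy)*(qy - cy)).
  assert (Df : forall t, is_derive f t (ds t * (vx t * (qx-cx) + vy t * (qy - cy)))).
  { intro t. specialize (Dx t); specialize (Dy t). unfold f. auto_derive.
    - repeat split; eexists; eassumption.
    - replace (Derive (fun x => bx x) t) with (ds t * vx t) by (symmetry; apply is_derive_unique; exact Dx).
      replace (Derive (fun x => byy x) t) with (ds t * vy t) by (symmetry; apply is_derive_unique; exact Dy). ring. }
  assert (Pf : forall t, f (t+3) = f t). { intro t. unfold f. rewrite Px, Py. reflexivity. }
  destruct (continuity_ab_maj f 0 3) as [M [HM HM3]]; [lra| intros; apply ex_derive_cont; eexists; apply Df |].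
  assert (Loc : forall x, M - 1 < x -> x < M + 1 -> f x <= f M).
  { intros x h1 h2. destruct (Rle_dec 0 x).
    - destruct (Rle_dec x 3). + apply HM; lra.
      + replace x with ((x - 3) + 3) by ring. rewrite Pf. apply HM; lra.
    - rewrite <- Pf. apply HM; lra. }
  pose proof (proj1 (is_derive_Reals _ _ _) (Df M)) as DM.
  pose proof (deriv_maximum f (M-1) (M+1) M (exist _ _ DM) ltac:(lra) ltac:(lra) Loc) as Z.
  simpl in Z. apply Rmult_integral in Z as [Z|Z]; [specialize (Pds M); lra|].
  assert (Ou := Ort M).
  assert (Ow : (qx - cx) * vx M + (qy - cy) * vy M = 0) by lra.
  destruct (par _ _ _ _ Ou (Nv M)) as [U1 U2].
  destruct (par _ _ _ _ Ow (Nv M)) as [W1 W2].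
  set (a := ((byy M - cy) * vx M - (bx M - cx) * vy M) / (vx M ^ 2 + vy M ^ 2)) in *.
  set (b := ((qy - cy) * vx M - (qx - cx) * vy M) / (vx M ^ 2 + vy M ^ 2)) in *.
  clearbody a b.
  assert (R1 := Rad M). rewrite U1, U2 in R1. rewrite W1, W2 in Hq.
  assert (E : (a - b) * (a + b) * (vx M ^2 + vy M^2) = 0).
  { transitivity ((a * - vy M) ^ 2 + (a * vx M) ^ 2 - ((b * - vy M) ^ 2 + (b * vx M) ^ 2)); [ring|]. lra. }
  apply Rmult_integral in E as [E|E]; [|exfalso; exact (Nv M E)].
  apply Rmult_integral in E as [E|E].
  - exists M. assert (a = b) by lra. subst a. split; lra.
  - exfalso. assert (b = - a) by lra. subst b.
    assert (FM : f M = - r2).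
    { unfold f. rewrite U1, U2, W1, W2. rewrite <- R1. ring. }
    assert (K : forall t, 0 <= t <= 3 -> bx t = 2*cx - qx /\ byy t = 2*cy - qy).
    { intros t Ht. assert (Ft : f t <= - r2) by (rewrite <- FM; apply HM; auto).
      assert (S : (bx t - cx + (qx - cx))^2 + (byy t - cy + (qy - cy))^2 = 0).
      { assert (S' : (bx t - cx + (qx - cx))^2 + (byy t - cy + (qy - cy))^2 =
                    ((bx t - cx)^2 + (byy t - cy)^2) + 2 * f t + ((qx - cx)^2 + (qy - cy)^2)) by (unfold f; ring).
        rewrite Rad, Hq0 in S'.
        apply Rle_antisym; [|apply Rplus_le_le_0_compat; apply pow2_ge_0]. rewrite S'. lra. }
      apply sq0 in S as [S1 S2]. split; lra. }
    destruct (K 0 ltac:(lra)) as [K1 K2]. destruct (K 1 ltac:(lra)) as [K3 K4].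
    apply N01. split; congruence.
Qed.

Lemma det_v g a b : vdet (unit_tangent g a) (unit_tangent g b) <> 0 ->
  Derive (gx g) a * Derive (gy g) b - Derive (gy g) a * Derive (gx g) b <> 0.
Proof.
  rewrite !ut_eq. unfold vdet; simpl. intros H E. apply H.
  transitivity (/ vnorm (velocity g a) * / vnorm (velocity g b) * (Derive (gx g) a * Derive (gy g) b - Derive (gy g) a * Derive (gx g) b)); [ring|].
  rewrite E; ring.
Qed.

Theorem proposition6p1 : forall g : R -> pt, fine_curve 3 g -> is_circle g.
Proof.
  intros g [_ [[Hsm [_ Hreg]] [sj [Hd [Hsh [Hfr Hnp]]]]]].
  change (smooth g) in Hsm.
  set (s0 := sj 0%nat). set (s1 := sj 1%nat). set (s2 := sj 2%nat).
  assert (Ex0 : forall t, ex_derive s0 t) by (intro t; apply (Hd 0%nat t); lia).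
  assert (Ex1 : forall t, ex_derive s1 t) by (intro t; apply (Hd 1%nat t); lia).
  assert (Ex2 : forall t, ex_derive s2 t) by (intro t; apply (Hd 2%nat t); lia).
  assert (Pos0 : forall t, 0 < Derive s0 t) by (intro t; apply (Hd 0%nat t); lia).
  assert (Sh0 : forall t, g (s0 (t+1)) = g (s1 t)) by (intro t; apply (Hsh 0%nat t); lia).
  assert (Sh1 : forall t, g (s1 (t+1)) = g (s2 t)) by (intro t; apply (Hsh 1%nat t); lia).
  assert (Sh2 : forall t, g (s2 (t+1)) = g (s0 t)) by (intro t; apply (Hsh 2%nat t); lia).
  assert (Per : forall t, g (s0 (t+3)) = g (s0 t)).
  { intro t. replace (t+3) with ((t+2)+1) by ring. rewrite Sh0.
    replace (t+2) with ((t+1)+1) by ring. rewrite Sh1. apply Sh2. }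
  assert (PW : forall t,
    (Cx g s0 s1 t - Bx g s0 t) * Vx g s0 t + (Cy g s0 s1 t - By g s0 t) * Vy g s0 t = 0 /\
    (Cx g s0 s1 t - Bx g s1 t) * Vx g s1 t + (Cy g s0 s1 t - By g s1 t) * Vy g s1 t = 0 /\
    (Cx g s0 s1 t - Bx g s2 t) * Vx g s2 t + (Cy g s0 s1 t - By g s2 t) * Vy g s2 t = 0 /\
    (Cx g s0 s1 t - Bx g s1 t)^2 + (Cy g s0 s1 t - By g s1 t)^2 = (Cx g s0 s1 t - Bx g s0 t)^2 + (Cy g s0 s1 t - By g s0 t)^2 /\
    (Cx g s0 s1 t - Bx g s2 t)^2 + (Cy g s0 s1 t - By g s2 t)^2 = (Cx g s0 s1 t - Bx g s0 t)^2 + (Cy g s0 s1 t - By g s0 t)^2 /\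
    (Bx g s1 t - Bx g s0 t) * (By g s2 t - By g s1 t) - (By g s1 t - By g s0 t) * (Bx g s2 t - Bx g s1 t) <> 0 /\
    0 < (Cx g s0 s1 t - Bx g s0 t)^2 + (Cy g s0 s1 t - By g s0 t)^2).
  { intro t. destruct (Hfr t 0%nat ltac:(lia)) as [N0 [U0 A0]].
    destruct (Hfr t 1%nat ltac:(lia)) as [N1 [U1 A1]].
    destruct (Hfr t 2%nat ltac:(lia)) as [N2 [U2 A2]].
    pose proof (Hnp 0%nat t ltac:(lia)) as D0. pose proof (Hnp 1%nat t ltac:(lia)) as D1.
    pose proof (Hnp 2%nat t ltac:(lia)) as D2.
    change (succ_mod 3 0) with 1%nat in *. change (succ_mod 3 1) with 2%nat in *.
    change (succ_mod 3 2) with 0%nat in *.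
    apply (pointwise g s0 s1 s2 t Hreg N0 N1 N2 U0 U1 U2 A0 A1 A2 D0 D1 D2). }
  assert (Dv : forall t, Vx g s0 t * Vy g s1 t - Vy g s0 t * Vx g s1 t <> 0).
  { intro t. apply det_v. apply (Hnp 0%nat t ltac:(lia)). }
  assert (F1 : forall t, dist2 g s0 s1 s1 t = dist2 g s0 s1 s0 t) by (intro t; apply (PW t)).
  assert (F2 : forall t, dist2 g s0 s1 s2 t = dist2 g s0 s1 s0 t) by (intro t; apply (PW t)).
  assert (CD : forall t, is_derive (Cx g s0 s1) t 0 /\ is_derive (Cy g s0 s1) t 0 /\ is_derive (dist2 g s0 s1 s0) t 0).
  { intro t. destruct (PW t) as [O0 [O1 [O2 [_ [_ [Hdet _]]]]]].
    apply (center_deriv0 g s0 s1 s2 t Hsm Ex0 Ex1 Ex2 (Dv t) O0 O1 O2 F1 F2 Hdet). }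
  pose proof (const0 (Cx g s0 s1) (fun t => proj1 (CD t))) as KCx.
  pose proof (const0 (Cy g s0 s1) (fun t => proj1 (proj2 (CD t)))) as KCy.
  pose proof (const0 (dist2 g s0 s1 s0) (fun t => proj2 (proj2 (CD t)))) as Kd.
  set (cx := Cx g s0 s1 0) in *. set (cy := Cy g s0 s1 0) in *. set (d0 := dist2 g s0 s1 s0 0) in *.
  assert (Hd0 : 0 < d0) by apply (PW 0).
  assert (Rad : forall t, (Bx g s0 t - cx)^2 + (By g s0 t - cy)^2 = d0).
  { intro t. rewrite <- (Kd t). unfold dist2. rewrite (KCx t), (KCy t). ring. }
  assert (Cgx : continuity (gx g)).
  { intro x. apply ex_derive_cont. exact (proj1 (Hsm 0%nat x)). }
  assert (Cgy : continuity (gy g)).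
  { intro x. apply ex_derive_cont. exact (proj2 (Hsm 0%nat x)). }
  assert (Inc : forall x y, x < y -> s0 x < s0 y).
  { intros x y Hxy. apply (incr_function s0 m_infty p_infty (Derive s0)).
    - intros z _ _. apply Derive_correct. apply Ex0.
    - intros z _ _. apply Pos0.
    - exact I.
    - exact Hxy.
    - exact I. }
  assert (G01 : g (s0 0) <> g (s0 1)).
  { replace 1 with (0+1) by ring. rewrite Sh0. destruct (Hfr 0 0%nat ltac:(lia)) as [N _]. exact N. }
  assert (G02 : g (s0 0) <> g (s0 (-1))).
  { rewrite <- (Per (-1)). replace (-1+3) with ((0+1)+1) by ring. rewrite Sh0, Sh1.
    destruct (Hfr 0 2%nat ltac:(lia)) as [N _]. change (succ_mod 3 2) with 0%nat in N. auto. }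
  assert (Surj : forall s, exists t, s0 t = s).
  { apply (surj s0 g Inc); auto. intro x. apply ex_derive_cont. apply Ex0. }
  exists (cx, cy), (sqrt d0). split; [apply sqrt_lt_R0; exact Hd0|].
  intro p. split.
  - intros [s Hs]. destruct (Surj s) as [t Ht]. subst s p.
    unfold vnorm, vsub; simpl. f_equal. apply (Rad t).
  - intro Hp. unfold vnorm, vsub in Hp; simpl in Hp.
    apply sqrt_inj in Hp; [| apply Rplus_le_le_0_compat; apply pow2_ge_0 | lra].
    destruct (cover (Bx g s0) (By g s0) (Vx g s0) (Vy g s0) (Derive s0) cx cy d0 (fst p) (snd p)) as [t [T1 T2]].
    + intro t. apply dBx; auto. apply Derive_correct, Ex0.
    + intro t. apply dBy; auto. apply Derive_correct, Ex0.
    + exact Pos0.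
    + intros t E. apply sq0 in E as [E1 E2]. apply (Hreg (s0 t)). unfold velocity. unfold Vx, Vy in *.
      rewrite E1, E2. reflexivity.
    + intro t. destruct (PW t) as [O0 _]. rewrite (KCx t), (KCy t) in O0. lra.
    + exact Rad.
    + intro t. unfold Bx. rewrite Per. reflexivity.
    + intro t. unfold By. rewrite Per. reflexivity.
    + intros [E1 E2]. apply G01. unfold Bx, By in *.
      rewrite (surjective_pairing (g (s0 0))), (surjective_pairing (g (s0 1))), E1, E2. reflexivity.
    + exact Hp.
    + exists (s0 t). unfold Bx, By in *. rewrite (surjective_pairing (g (s0 t))), T1, T2.
      destruct p; reflexivity.
Qed.
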